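(* Let $\Delta x>0$, $x_i\in\mathbb{R}$, $M\in\mathbb{N}_0$, and let $p_h(x;x_i,\Delta x)=\sum_{m=0}^{M}c_{h_m}\left(\frac{x-x_i}{\Delta x}\right)^m$ be a polynomial of degree $M$. Then $$p_f(x;x_i,\Delta x):=\frac{1}{\Delta x}\int_{x-\frac12\Delta x}^{x+\frac12\Delta x}p_h(\zeta;x_i,\Delta x)\,d\zeta$$ is a polynomial also of degree $M$, $p_f(x;x_i,\Delta x)=\sum_{m=0}^M c_{f_m}\left(\frac{x-x_i}{\Delta x}\right)^m$, with $$c_{f_m}=\sum_{k=0}^{\lfloor (M-m)/2\rfloor}\frac{c_{h_{m+2k}}}{2^{2k}(2k+1)}\binom{m+2k}{2k},\qquad\text{equivalently}\qquad m!\,c_{f_m}=\sum_{k=0}^{\lfloor (M-m)/2\rfloor}\frac{(m+2k)!}{2^{2k}(2k+1)!}c_{h_{m+2k}},$$ for all $m\in\{0,\dots,M\}$. Inversely, $$c_{h_m}=\frac{1}{m!}\sum_{k=0}^{\lfloor (M-m)/2\rfloor}\tau_{2k}\,c_{f_{m+2k}}\,(m+2k)!\qquad\forall m\in\{0,\dots,M\},$$ where $\tau_0=1$ and $\tau_{2k}=\sum_{s=0}^{k-1}\frac{-\tau_{2s}}{2^{2k-2s}(2k-2s+1)!}$ for $k>0$ (equivalently $\tau_n=g_\tau^{(n)}(0)/n!$ with $g_\tau(x)=\frac{x/2}{\sinh(x/2)}$). *)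

(* Defs.v *)
From Stdlib Require Import Reals Arith.
From Coquelicot Require Import Coquelicot.
Open Scope R_scope.

Definition ppoly (c : nat -> R) (M : nat) (xi dx x : R) : R :=
  sum_f_R0 (fun m => c m * ((x - xi) / dx) ^ m) M.

Definition pavg (c : nat -> R) (M : nat) (xi dx x : R) : R :=
  RInt (fun z => ppoly c M xi dx z) (x - dx / 2) (x + dx / 2) / dx.

Definition cf (c : nat -> R) (M m : nat) : R :=
  sum_f_R0 (fun k => c (m + 2 * k)%nat / (2 ^ (2 * k) * INR (2 * k + 1))
                      * Binomial.C (m + 2 * k) (2 * k))
           ((M - m) / 2).

(* taus k s = tau_{2s} for s <= k, built by the recursion
   tau_0 = 1, tau_{2k} = sum_{s=0}^{k-1} - tau_{2s} / (2^{2k-2s} (2k-2s+1)!) *)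
Fixpoint taus (k : nat) : nat -> R :=
  match k with
  | O => fun _ => 1
  | S k' =>
      let t := taus k' in
      fun s => if (s <=? k')%nat then t s
               else sum_f_R0 (fun s' => - t s' /
                      (2 ^ (2 * S k' - 2 * s') * INR (fact (2 * S k' - 2 * s' + 1)))) k'
  end.

(* tau k = tau_{2k} *)
Definition tau (k : nat) : R := taus k k.

(* Main.v *)
Require Import Defs.
From Stdlib Require Import Reals Arith Lra Lia.
From Coquelicot Require Import Coquelicot.
Open Scope R_scope.
Ltac dm x := pose proof (Nat.div_mod_eq x 2); pose proof (Nat.mod_upper_bound x 2 ltac:(lia)).

Lemma sum_rev (F : nat -> R) n :
  sum_f_R0 (fun k => F (n - k)%nat) n = sum_f_R0 F n.
Proof.
  induction n as [|n IH]; [reflexivity|].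
  rewrite decomp_sum by lia. simpl pred. rewrite Nat.sub_0_r.
  replace (sum_f_R0 (fun i => F (S n - S i)%nat) n) with (sum_f_R0 (fun i => F (n - i)%nat) n)
    by (apply sum_eq; intros; reflexivity).
  rewrite IH. simpl. ring.
Qed.

Lemma triangle (f : nat -> nat -> R) N :
  sum_f_R0 (fun n => sum_f_R0 (fun j => f n j) n) N =
  sum_f_R0 (fun m => sum_f_R0 (fun j => f (m + j)%nat j) (N - m)) N.
Proof.
  induction N as [|N IH]; [reflexivity|].
  simpl sum_f_R0 at 1. rewrite IH.
  transitivity (sum_f_R0 (fun m => sum_f_R0 (fun j => f (m + j)%nat j) (N - m)
        + f (S N) (S (N - m))) N + f (S N) 0%nat).
  - rewrite sum_plus. rewrite Rplus_assoc. f_equal.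
    change (sum_f_R0 (fun l => f (S N) (S (N - l))) N) with
      (sum_f_R0 (fun l => (fun i => f (S N) (S i)) (N - l)%nat) N). rewrite sum_rev.
    change (sum_f_R0 (fun j => f (S N) j) N + f (S N) (S N)) with
      (sum_f_R0 (fun j => f (S N) j) (S N)).
    rewrite decomp_sum by lia. simpl pred. ring.
  - rewrite tech5, Nat.sub_diag. f_equal.
    + apply sum_eq. intros i Hi. cbv beta.
      replace (S N - i)%nat with (S (N - i)) by lia. simpl sum_f_R0 at 2.
      f_equal. f_equal. lia.
    + simpl. rewrite Nat.add_0_r. reflexivity.
Qed.

Lemma cauchy_tri (g : nat -> nat -> R) N :
  sum_f_R0 (fun k => sum_f_R0 (fun j => g k j) (N - k)) N =
  sum_f_R0 (fun n => sum_f_R0 (fun k => g k (n - k)%nat) n) N.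
Proof.
  pose proof (triangle (fun n j => g (n - j)%nat j) N) as H. simpl in H.
  transitivity (sum_f_R0 (fun m => sum_f_R0 (fun j => g (m + j - j)%nat j) (N - m)) N).
  { apply sum_eq; intros; apply sum_eq; intros. f_equal. lia. }
  rewrite <- H. apply sum_eq. intros n Hn.
  rewrite <- (sum_rev (fun j => g (n - j)%nat j)). apply sum_eq. intros k Hk.
  f_equal. lia.
Qed.

Lemma parity_aux (G : nat -> R) (HG : forall k, G (2 * k + 1)%nat = 0) L :
  sum_f_R0 G (2 * L) = sum_f_R0 (fun k => G (2 * k)%nat) L /\
  sum_f_R0 G (2 * L + 1) = sum_f_R0 (fun k => G (2 * k)%nat) L.
Proof.
  induction L as [|L [IH1 IH2]].
  - simpl. pose proof (HG 0%nat) as H0. simpl in H0. rewrite H0. split; ring.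
  - assert (E1 : sum_f_R0 G (2 * S L) = sum_f_R0 (fun k => G (2 * k)%nat) (S L)).
    { replace (2 * S L)%nat with (S (2 * L + 1)) by lia. rewrite tech5.
      rewrite IH2. rewrite tech5. f_equal. f_equal. lia. }
    split; [exact E1|].
    replace (2 * S L + 1)%nat with (S (2 * S L)) by lia. rewrite tech5.
    rewrite E1. replace (S (2 * S L)) with (2 * S L + 1)%nat by lia. rewrite HG. ring.
Qed.

Lemma parity (G : nat -> R) (HG : forall k, G (2 * k + 1)%nat = 0) L :
  sum_f_R0 G L = sum_f_R0 (fun k => G (2 * k)%nat) (L / 2).
Proof.
  dm L. destruct (parity_aux G HG (L / 2)) as [A B].
  destruct (L mod 2) as [|[|]] eqn:E; [| |lia].
  - replace L with (2 * (L / 2))%nat at 1 by lia. exact A.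
  - replace L with (2 * (L / 2) + 1)%nat at 1 by lia. exact B.
Qed.
Lemma term_der (a dx xi z : R) n : dx <> 0 ->
  is_derive (fun z => a * dx / INR (S n) * ((z - xi) / dx) ^ (S n)) z (a * ((z - xi) / dx) ^ n).
Proof.
  intros Hdx. auto_derive; [auto|].
  change (match n with 0%nat => 1 | S _ => INR n + 1 end) with (INR (S n)).
  assert (INR (S n) <> 0) by (apply not_0_INR; lia).
  change ((z + - xi) * / dx) with ((z - xi) / dx). set (u := ((z - xi) / dx) ^ n). field. auto.
Qed.
Lemma term_exd (a dx xi z : R) n :
  ex_derive (fun z => a * ((z - xi) / dx) ^ n) z.
Proof. auto_derive. auto. Qed.

Definition Fa (c : nat -> R) (M : nat) (xi dx z : R) :=
  sum_f_R0 (fun n => c n * dx / INR (S n) * ((z - xi) / dx) ^ (S n)) M.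

Lemma Fa_der c M xi dx z : dx <> 0 ->
  is_derive (fun z => Fa c M xi dx z) z
    (sum_f_R0 (fun n => c n * ((z - xi) / dx) ^ n) M).
Proof.
  intros Hdx. induction M as [|M IH].
  - exact (term_der (c 0%nat) dx xi z 0 Hdx).
  - unfold Fa. simpl sum_f_R0.
    apply (is_derive_plus (fun z => Fa c M xi dx z)); auto. exact (term_der (c (S M)) dx xi z (S M) Hdx).
Qed.

Lemma pp_exd c M xi dx z :
  ex_derive (fun z => sum_f_R0 (fun n => c n * ((z - xi) / dx) ^ n) M) z.
Proof.
  induction M as [|M IH].
  - exact (term_exd (c 0%nat) dx xi z 0).
  - apply (@ex_derive_plus R_AbsRing R_NormedModule). exact IH. exact (term_exd (c (S M)) dx xi z (S M)).
Qed.

Lemma pp_cont c M xi dx z :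
  continuous (fun z => sum_f_R0 (fun n => c n * ((z - xi) / dx) ^ n) M) z.
Proof.
  apply (@ex_derive_continuous R_AbsRing R_NormedModule). apply pp_exd.
Qed.

Lemma RInt_pp c M xi dx a b : dx <> 0 ->
  RInt (fun z => ppoly c M xi dx z) a b = Fa c M xi dx b - Fa c M xi dx a.
Proof.
  intros Hdx. apply is_RInt_unique. unfold ppoly.
  apply (is_RInt_derive (fun z => Fa c M xi dx z)).
  - intros; apply Fa_der; auto.
  - intros; apply pp_cont.
Qed.

Definition Q n t := ((t + /2) ^ (S n) - (t - /2) ^ (S n)) / INR (S n).
Definition mu j := ((/2) ^ (S j) - (-/2) ^ (S j)) / INR (S j).

Lemma avg_Q c M xi dx x : dx <> 0 ->
  pavg c M xi dx x = sum_f_R0 (fun n => c n * Q n ((x - xi) / dx)) M.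
Proof.
  intros Hdx. unfold pavg. rewrite RInt_pp by auto. unfold Fa.
  rewrite <- minus_sum. unfold Rdiv at 1. rewrite Rmult_comm, scal_sum.
  apply sum_eq. intros n Hn. unfold Q.
  replace ((x + dx / 2 - xi) / dx) with ((x - xi) / dx + / 2) by (field; auto).
  replace ((x - dx / 2 - xi) / dx) with ((x - xi) / dx - / 2) by (field; auto).
  set (p := ((x - xi) / dx + / 2) ^ S n). set (q := ((x - xi) / dx - / 2) ^ S n).
  assert (INR (S n) <> 0) by (apply not_0_INR; lia).
  field. auto.
Qed.

Lemma C_S n i : Binomial.C (S n) (S i) = INR (S n) / INR (S i) * Binomial.C n i.
Proof.
  unfold Binomial.C. change (S n - S i)%nat with (n - i)%nat.
  change (fact (S n)) with (S n * fact n)%nat. change (fact (S i)) with (S i * fact i)%nat.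
  rewrite !mult_INR.
  assert (INR (S i) <> 0) by (apply not_0_INR; lia).
  pose proof (INR_fact_neq_0 n). pose proof (INR_fact_neq_0 i). pose proof (INR_fact_neq_0 (n - i)).
  field. auto.
Qed.

Lemma Q_binom n t : Q n t = sum_f_R0 (fun j => Binomial.C n j * mu j * t ^ (n - j)) n.
Proof.
  unfold Q. rewrite (Rplus_comm t), binomial.
  replace (t - /2) with (-/2 + t) by ring. rewrite binomial.
  rewrite <- minus_sum. rewrite decomp_sum by lia. simpl pred.
  unfold Rdiv. rewrite Rmult_plus_distr_r.
  match goal with |- ?A * _ + _ = _ => replace A with 0 by (simpl pow; ring) end.
  rewrite Rmult_0_l, Rplus_0_l. rewrite Rmult_comm, scal_sum.
  apply sum_eq. intros i Hi. change (S n - S i)%nat with (n - i)%nat.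
  rewrite C_S. unfold mu.
  set (a := (/2) ^ S i). set (b := (-/2) ^ S i). set (d := t ^ (n - i)).
  assert (INR (S i) <> 0) by (apply not_0_INR; lia).
  assert (INR (S n) <> 0) by (apply not_0_INR; lia).
  field. auto.
Qed.

Lemma pow_m2 k : (-/2) ^ (2 * k) = (/2) ^ (2 * k).
Proof. rewrite !pow_mult. f_equal. field. Qed.

Lemma mu_even k : mu (2 * k) = / (2 ^ (2 * k) * INR (2 * k + 1)).
Proof.
  unfold mu. change ((/2) ^ S (2 * k)) with (/2 * (/2) ^ (2 * k)).
  change ((-/2) ^ S (2 * k)) with (-/2 * (-/2) ^ (2 * k)).
  rewrite pow_m2, pow_inv. replace (S (2 * k)) with (2 * k + 1)%nat by lia.
  assert (INR (2 * k + 1) <> 0) by (apply not_0_INR; lia).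
  assert (2 ^ (2 * k) <> 0) by (apply pow_nonzero; lra).
  set (p := 2 ^ (2 * k)) in *. field. auto.
Qed.

Lemma mu_odd k : mu (2 * k + 1) = 0.
Proof.
  unfold mu. replace (S (2 * k + 1)) with (2 * S k)%nat by lia.
  rewrite pow_m2. unfold Rdiv. ring.
Qed.

Lemma part1 c M xi dx x : dx <> 0 ->
  pavg c M xi dx x = ppoly (cf c M) M xi dx x.
Proof.
  intros Hdx. rewrite avg_Q by auto. set (t := (x - xi) / dx).
  transitivity (sum_f_R0 (fun n => sum_f_R0 (fun j =>
      (fun n j => Binomial.C n j * mu j * t ^ (n - j) * c n) n j) n) M).
  { apply sum_eq. intros n Hn. rewrite Q_binom, scal_sum. reflexivity. }
  rewrite triangle. unfold ppoly. fold t.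
  apply sum_eq. intros m Hm.
  rewrite (parity (fun j => Binomial.C (m + j) j * mu j * t ^ (m + j - j) * c (m + j)%nat)).
  2:{ intros k. rewrite mu_odd. ring. }
  rewrite (Rmult_comm (cf c M m)). unfold cf. rewrite scal_sum. apply sum_eq. intros k Hk.
  replace (m + 2 * k - 2 * k)%nat with m by lia. rewrite mu_even.
  unfold Rdiv. ring.
Qed.

Ltac dm2 x := pose proof (Nat.div_mod_eq x 2); pose proof (Nat.mod_upper_bound x 2 ltac:(lia)).

Lemma taus_stable k s : (s <= k)%nat -> taus k s = tau s.
Proof.
  induction k as [|k IH]; intros Hs.
  - assert (s = 0%nat) by lia. subst. reflexivity.
  - destruct (Nat.le_gt_cases s k) as [H|H].
    + cbn [taus]. rewrite (proj2 (Nat.leb_le _ _) H). auto.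
    + assert (s = S k) by lia. subst. reflexivity.
Qed.

Lemma tau_rec k : tau (S k) = sum_f_R0 (fun s => - tau s /
    (2 ^ (2 * S k - 2 * s) * INR (fact (2 * S k - 2 * s + 1)))) k.
Proof.
  unfold tau at 1. cbn [taus].
  rewrite (proj2 (Nat.leb_gt _ _) (Nat.lt_succ_diag_r k)).
  apply sum_eq. intros s Hs. rewrite taus_stable by lia. reflexivity.
Qed.

Definition sgm j := / (2 ^ (2 * j) * INR (fact (2 * j + 1))).

Lemma tau_conv n : sum_f_R0 (fun k => tau k * sgm (n - k)) n = if (n =? 0)%nat then 1 else 0.
Proof.
  destruct n as [|k].
  - simpl. unfold tau, sgm. simpl. field.
  - rewrite tech5, tau_rec. rewrite Nat.sub_diag.
    replace (sgm 0) with 1 by (unfold sgm; simpl; field).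
    rewrite Rmult_1_r. rewrite <- sum_plus.
    transitivity (sum_f_R0 (fun _ => 0) k).
    + apply sum_eq. intros s Hs. unfold sgm.
      replace (2 * (S k - s))%nat with (2 * S k - 2 * s)%nat by lia.
      set (p := 2 ^ (2 * S k - 2 * s)).
      assert (p <> 0) by (apply pow_nonzero; lra).
      pose proof (INR_fact_neq_0 (2 * S k - 2 * s + 1)).
      field. auto.
    + rewrite sum_cte. simpl. ring.
Qed.

Lemma delta_sum (F : nat -> R) N :
  sum_f_R0 (fun n => (if (n =? 0)%nat then 1 else 0) * F n) N = F 0%nat.
Proof.
  induction N as [|N IH].
  - simpl. ring.
  - rewrite tech5, IH. simpl. ring.
Qed.

Lemma part3 c M m : (m <= M)%nat ->
  INR (fact m) * cf c M m =
  sum_f_R0 (fun k => INR (fact (m + 2 * k)) /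
     (2 ^ (2 * k) * INR (fact (2 * k + 1))) * c (m + 2 * k)%nat) ((M - m) / 2).
Proof.
  intros Hm. unfold cf. rewrite scal_sum. apply sum_eq. intros k Hk.
  unfold Binomial.C. replace (m + 2 * k - 2 * k)%nat with m by lia.
  replace (2 * k + 1)%nat with (S (2 * k)) by lia.
  change (fact (S (2 * k))) with (S (2 * k) * fact (2 * k))%nat. rewrite mult_INR.
  set (p := 2 ^ (2 * k)).
  assert (p <> 0) by (apply pow_nonzero; lra).
  assert (INR (S (2 * k)) <> 0) by (apply not_0_INR; lia).
  pose proof (INR_fact_neq_0 m). pose proof (INR_fact_neq_0 (2 * k)).
  pose proof (INR_fact_neq_0 (m + 2 * k)).
  field. auto.
Qed.

Lemma part3' c M m : (m <= M)%nat ->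
  cf c M m * INR (fact m) =
  sum_f_R0 (fun j => sgm j * (INR (fact (m + 2 * j)) * c (m + 2 * j)%nat)) ((M - m) / 2).
Proof.
  intros Hm. rewrite Rmult_comm, part3 by auto. apply sum_eq. intros; unfold sgm, Rdiv. ring.
Qed.

Lemma part4 c M m : (m <= M)%nat ->
  c m = / INR (fact m) *
     sum_f_R0 (fun k => tau k * cf c M (m + 2 * k) * INR (fact (m + 2 * k))) ((M - m) / 2).
Proof.
  intros Hm. set (N := ((M - m) / 2)%nat).
  set (a := fun n => INR (fact n) * c n).
  transitivity (/ INR (fact m) * sum_f_R0 (fun k => sum_f_R0 (fun j =>
      (fun k j => tau k * sgm j * a (m + 2 * (k + j))%nat) k j) (N - k)) N).
  2:{ f_equal. apply sum_eq. intros k Hk. rewrite Rmult_assoc, part3'.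
      2:{ unfold N in Hk. dm2 (M - m)%nat. lia. }
      replace ((M - (m + 2 * k)) / 2)%nat with (N - k)%nat.
      2:{ unfold N in *. dm2 (M - m)%nat. dm2 (M - (m + 2 * k))%nat. lia. }
      rewrite scal_sum. apply sum_eq. intros j Hj. unfold a.
      replace (m + 2 * k + 2 * j)%nat with (m + 2 * (k + j))%nat by lia. ring. }
  rewrite cauchy_tri.
  transitivity (/ INR (fact m) * sum_f_R0 (fun n =>
     (if (n =? 0)%nat then 1 else 0) * a (m + 2 * n)%nat) N).
  2:{ f_equal. apply sum_eq. intros n Hn. rewrite <- tau_conv, Rmult_comm, scal_sum.
      apply sum_eq. intros k Hk. replace (k + (n - k))%nat with n by lia. ring. }
  rewrite delta_sum. unfold a. rewrite Nat.add_0_r.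
  pose proof (INR_fact_neq_0 m). field. auto.
Qed.

Lemma part2 c M : c M <> 0 -> cf c M M <> 0.
Proof.
  intros H. unfold cf. rewrite Nat.sub_diag. simpl sum_f_R0.
  rewrite Nat.add_0_r. simpl. unfold Binomial.C. rewrite Nat.sub_0_r. pose proof (INR_fact_neq_0 M). simpl INR.
  replace (c M / (1 * 1) * (INR (fact M) / (1 * INR (fact M)))) with (c M) by (field; auto). auto.
Qed.

Theorem lemma3 (dx xi : R) (M : nat) (c : nat -> R)
  (hdx : 0 < dx) (hdeg : c M <> 0) :
  (forall x : R, pavg c M xi dx x = ppoly (cf c M) M xi dx x)
  /\ cf c M M <> 0
  /\ (forall m : nat, (m <= M)%nat ->
        INR (fact m) * cf c M m =
        sum_f_R0 (fun k => INR (fact (m + 2 * k)) /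
                             (2 ^ (2 * k) * INR (fact (2 * k + 1))) * c (m + 2 * k)%nat)
                 ((M - m) / 2))
  /\ (forall m : nat, (m <= M)%nat ->
        c m = / INR (fact m) *
              sum_f_R0 (fun k => tau k * cf c M (m + 2 * k) * INR (fact (m + 2 * k)))
                       ((M - m) / 2)).

Proof.
  split; [intros x; apply part1; lra|].
  split; [apply part2; auto|].
  split; [apply part3|apply part4].
Qed.
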